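(* Let $A=(a^k)_{k\in[n]}$ be a finite collection (multiset) of points of $[0,1]^2$. For every two average fixed points $x,y$ of $A$, either $x\le\le y$ or $y\le\le x$.
   Context: For vectors, $x\le\le y$ means $x_1\le y_1$ and $x_2\le y_2$. For a finite nonempty multiset $B$, $\operatorname{avg}(B)$ is the arithmetic mean of its elements (with multiplicity). For $x\in[0,1]^2$: $A_{<,<}(x)=\{a\in A:a_1<x_1,a_2<x_2\}$ and $A_{\le,\le}(x)=\{a\in A:a_1\le x_1,a_2\le x_2\}$ (sub-multisets). A point $x$ is an average fixed point of $A$ if there exists a sub-multiset $B\subseteq A_{\le,\le}(x)\setminus A_{<,<}(x)$ such that $\operatorname{avg}\big((A\setminus A_{\le,\le}(x))\cup B\big)=x$. *)

(* Defs.v *)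
From HB Require Import structures.
From mathcomp Require Import all_boot all_order all_algebra.
Set Implicit Arguments. Unset Strict Implicit. Unset Printing Implicit Defensive.
Import Order.TTheory GRing.Theory Num.Theory.
Local Open Scope ring_scope.

Definition le2 (R : realFieldType) (x y : R * R) : bool :=
  (x.1 <= y.1) && (x.2 <= y.2).

Definition lt2 (R : realFieldType) (x y : R * R) : bool :=
  (x.1 < y.1) && (x.2 < y.2).

Definition in_unit_sq (R : realFieldType) (x : R * R) : Prop :=
  0 <= x.1 <= 1 /\ 0 <= x.2 <= 1.

(* The multiset A is given as a family a : 'I_n -> R*R (with multiplicity);
   sub-multisets are sets of indices S : {set 'I_n}.
   avg a S = arithmetic mean of the points a k, k in S. *)
Definition avg (R : realFieldType) (n : nat) (a : 'I_n -> R * R)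
    (S : {set 'I_n}) : R * R :=
  ((\sum_(k in S) (a k).1) / #|S|%:R, (\sum_(k in S) (a k).2) / #|S|%:R).

Definition Ale (R : realFieldType) (n : nat) (a : 'I_n -> R * R) (x : R * R)
  : {set 'I_n} := [set k | le2 (a k) x].

Definition Alt (R : realFieldType) (n : nat) (a : 'I_n -> R * R) (x : R * R)
  : {set 'I_n} := [set k | lt2 (a k) x].

Definition avg_fixed_point (R : realFieldType) (n : nat) (a : 'I_n -> R * R)
    (x : R * R) : Prop :=
  in_unit_sq x /\
  exists B : {set 'I_n},
    B \subset (Ale a x :\: Alt a x) /\
    (~: Ale a x) :|: B != set0 /\
    avg a ((~: Ale a x) :|: B) = x.

(* Main.v *)
Require Import Defs.
From HB Require Import structures.
From mathcomp Require Import all_boot all_order all_algebra.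
From mathcomp Require Import ring lra.
Import Order.TTheory GRing.Theory Num.Theory.
Local Open Scope ring_scope.

Lemma core (R : realFieldType) n (f : 'I_n -> R) (Cx Cy : {set 'I_n}) (x y : R) :
  x < y -> \sum_(k in Cx) (f k - x) = 0 -> \sum_(k in Cy) (f k - y) = 0 ->
  (forall k, k \notin Cx -> f k <= x) ->
  (forall k, k \in Cx -> k \notin Cy -> x <= f k) -> Cy != set0 -> False.
Proof.
move=> xy sx sy H1 H2 Cy0.
have eK : \sum_(k in Cy :&: Cx) (f k - y) =
   \sum_(k in Cy :&: Cx) (f k - x) - (y - x) *+ #|Cy :&: Cx|.
  rewrite -sumr_const -sumrB; apply: eq_bigr => k _; ring.
have hK : \sum_(k in Cy :&: Cx) (f k - x) <= 0.
  move: sx; rewrite (big_setID Cy) /= setIC => sx.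
  have : 0 <= \sum_(k in Cx :\: Cy) (f k - x).
    apply: sumr_ge0 => k; rewrite inE => /andP [kCy kCx].
    by rewrite subr_ge0; apply: H2.
  move: sx; set u := \sum_(_ in _) _; set v := \sum_(_ in _) _ => sx; lra.
have hD : \sum_(k in Cy :\: Cx) (f k - y) <= (x - y) *+ #|Cy :\: Cx|.
  rewrite -sumr_const; apply: ler_sum => k; rewrite inE => /andP [kCx _].
  by rewrite lerD2r; apply: H1.
move: sy; rewrite (big_setID Cx) /= eK => sy.
have hc := cardsID Cx Cy.
have : (0 < #|Cy|)%N by rewrite card_gt0.
rewrite -hc => hpos.
move: hD sy hK; rewrite -[(x - y) *+ _]mulr_natr -[(y - x) *+ _]mulr_natr.
have : 0 < (#|Cy :&: Cx| + #|Cy :\: Cx|)%:R :> R by rewrite ltr0n.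
rewrite natrD.
set p := #|Cy :&: Cx|%:R; set q := #|Cy :\: Cx|%:R.
set u := \sum_(_ in _) _; set v := \sum_(_ in _) _.
have p0 : 0 <= p by rewrite ler0n.
have q0 : 0 <= q by rewrite ler0n.
move=> pq hD sy hK.
have w0 : 0 < (y - x) * (p + q) by apply: mulr_gt0; lra.
have e : (x - y) * q = (y - x) * p - (y - x) * (p + q) by ring.
move: hD; rewrite e; set w := (y - x) * (p + q); set z := (y - x) * p.
move: sy; rewrite -/z => sy hD.
move: w0; rewrite -/w => w0; lra.
Qed.

Lemma fp_props (R : realFieldType) (n : nat) (a : 'I_n -> R * R) (x : R * R) :
  avg_fixed_point a x -> exists C : {set 'I_n},
    [/\ C != set0, \sum_(k in C) ((a k).1 - x.1) = 0,
        \sum_(k in C) ((a k).2 - x.2) = 0,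
        (forall k, k \notin C -> le2 (a k) x) &
        (forall k, k \in C -> ~~ lt2 (a k) x)].
Proof.
move=> [_ [B [sB [C0 hav]]]].
exists ((~: Ale a x) :|: B); split => //.
- have c0 : #|(~: Ale a x) :|: B|%:R != 0 :> R.
    by rewrite pnatr_eq0 -lt0n card_gt0.
  move: hav => /(congr1 (@fst R R)) /= hav.
  by rewrite sumrB sumr_const -[x.1 *+ _]mulr_natr -hav mulfVK // subrr.
- have c1 : #|(~: Ale a x) :|: B|%:R != 0 :> R.
    by rewrite pnatr_eq0 -lt0n card_gt0.
  have /= hav2 := congr1 (@snd R R) hav.
  by rewrite sumrB sumr_const -[x.2 *+ _]mulr_natr -hav2 mulfVK // subrr.
- by move=> k; rewrite !inE negb_or negbK => /andP [] h _.
- move=> k; rewrite !inE => /orP [].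
  + rewrite /le2 /lt2 => h; apply: contra h => /andP [h1 h2].
    by rewrite !ltW.
  + move=> kB; move/subsetP: sB => /(_ k kB).
    by rewrite !inE => /andP [].
Qed.

Lemma nocross (R : realFieldType) (n : nat) (a : 'I_n -> R * R) (x y : R * R) :
  avg_fixed_point a x -> avg_fixed_point a y -> x.1 < y.1 -> y.2 < x.2 -> False.
Proof.
move=> /fp_props [Cx [Cx0 sx1 _ lx nx]] /fp_props [Cy [Cy0 sy1 _ ly ny]] h1 h2.
apply: (@core R n (fun k => (a k).1) Cx Cy x.1 y.1 h1 sx1 sy1) => //.
- by move=> k /lx /andP [].
- move=> k kx ky; have := nx k kx; have := ly k ky.
  rewrite /le2 /lt2 => /andP [_ hk2].
  have hk : (a k).2 < x.2 by apply: le_lt_trans h2.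
  by rewrite hk andbT -leNgt.
Qed.

Theorem lemma2 (R : realFieldType) (n : nat) (a : 'I_n -> R * R)
  (ha : forall k, in_unit_sq (a k)) (x y : R * R) :
  avg_fixed_point a x -> avg_fixed_point a y -> le2 x y \/ le2 y x.
Proof.
move=> fx fy.
case: (leP x.1 y.1) => h1; case: (leP x.2 y.2) => h2.
- by left; rewrite /le2 h1 h2.
- have [e|lt] := eqVneq x.1 y.1.
    by right; rewrite /le2 e lexx (ltW h2).
  exfalso; apply: (@nocross _ _ a x y fx fy) => //.
  by rewrite lt_neqAle lt h1.
- have [e|lt] := eqVneq x.2 y.2.
    by right; rewrite /le2 e lexx (ltW h1).
  exfalso; apply: (@nocross _ _ a y x fy fx) => //.
  by rewrite lt_neqAle lt h2.
- by right; apply/andP; split; apply: ltW.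
Qed.
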